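(* Let $I\subsetneq\mathbb{N}$ be infinite, $I=I^+\sqcup I^-$ a partition, and $J=\mathbb{N}\setminus I$. For each $j\in J$ let $d_j\in E$ be a linear combination of monomials of odd length, each of which is a product of generators $e_i$ with $i\in I$ and contains an even number of factors $e_i$ with $i\in I^-$. Let $\varphi\in\mathrm{Aut}(E)$, $\varphi^2=\mathrm{id}$, be the automorphism given on generators by $\varphi(e_i)=e_i$ for $i\in I^+$, $\varphi(e_i)=-e_i$ for $i\in I^-$, and $\varphi(e_i)=-e_i+2d_i$ for $i\in J$. Then $E_\varphi$ is $\mathbb{Z}_2$-isomorphic to one of the superalgebras $E_\infty$, $E_{k^\ast}$ or $E_k$ for some $k$.
   Context: $F$ is a field of characteristic zero, $L$ an infinite-dimensional $F$-vector space with basis $e_1,e_2,\ldots$, $E$ its Grassmann algebra (basis $1$ and monomials $e_{i_1}\cdots e_{i_m}$, $i_1<\cdots<i_m$, with $e_ie_j=-e_je_i$). $E_\varphi$ is the $\mathbb{Z}_2$-grading on $E$ by eigenspaces of $\varphi$ for eigenvalues $1$ (degree 0) and $-1$ (degree 1). Homogeneous gradings: $E_k$ has $e_1,\ldots,e_k$ of degree $0$ and the other $e_i$ of degree $1$; $E_{k^\ast}$ has $e_1,\ldots,e_k$ of degree $1$ and the others of degree $0$; $E_\infty$ has $e_i$ of degree $0$ for $i$ even and $1$ for $i$ odd. Two superalgebras are $\mathbb{Z}_2$-isomorphic if there is an algebra isomorphism mapping the degree-$i$ component onto the degree-$i$ component, $i=0,1$. *)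

(* Defs.v *)
From HB Require Import structures.
From mathcomp Require Import all_boot all_order all_algebra.
From mathcomp Require Import finmap.
Set Implicit Arguments. Unset Strict Implicit. Unset Printing Implicit Defensive.
Import Order.TTheory GRing.Theory Num.Theory.
Local Open Scope fset_scope.
Local Open Scope ring_scope.

(* The Grassmann algebra E over F on generators e_i, i : nat (0-based:
   our e_i is the paper's e_(i+1)).  Elements are coefficient functions
   on monomials e_A (A a finite set of indices, written in increasing
   order); the ambient type [gT F] of all coefficient functions carries
   the (well-defined) exterior product, and E is the subset [gfin] of
   finitely supported functions. *)
Definition gT (F : fieldType) := {fset nat} -> F.

Section Grassmann.
Variable F : fieldType.

Definition gadd (x y : gT F) : gT F := fun A => x A + y A.
Definition gscale (c : F) (x : gT F) : gT F := fun A => c * x A.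
Definition gopp (x : gT F) : gT F := gscale (-1) x.

Definition ginv (A B : {fset nat}) : nat :=
  (\sum_(a <- A) \sum_(b <- B) (b < a)%N)%N.

(* e_A * e_B = (-1)^(ginv A B) e_(A u B) if A, B disjoint, 0 otherwise *)
Definition gmul (x y : gT F) : gT F := fun C =>
  \sum_(A <- fpowerset C) (-1) ^+ ginv A (C `\` A) * x A * y (C `\` A).

Definition gone : gT F := fun A => (A == fset0)%:R.
Definition gen (i : nat) : gT F := fun A => (A == [fset i])%:R.

Definition gfin (x : gT F) : Prop :=
  exists S : seq {fset nat}, forall A, A \notin S -> x A = 0.

Definition alg_endo (f : gT F -> gT F) : Prop :=
  [/\ forall x, gfin x -> gfin (f x),
      forall x y, gfin x -> gfin y -> f (gadd x y) = gadd (f x) (f y),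
      forall c x, gfin x -> f (gscale c x) = gscale c (f x),
      forall x y, gfin x -> gfin y -> f (gmul x y) = gmul (f x) (f y)
    & f gone = gone].

Definition alg_aut (f : gT F -> gT F) : Prop :=
  [/\ alg_endo f,
      forall x y, gfin x -> gfin y -> f x = f y -> x = y
    & forall y, gfin y -> exists2 x, gfin x & f x = y].

Definition hom_comp (deg1 : pred nat) (b : bool) (x : gT F) : Prop :=
  gfin x /\ forall A, x A != 0 -> odd #|` [fset a in A | deg1 a]| = b.

Definition phi_comp (phi : gT F -> gT F) (b : bool) (x : gT F) : Prop :=
  gfin x /\ phi x = (if b then gopp x else x).

Definition z2_maps (phi psi : gT F -> gT F) (deg1 : pred nat) : Prop :=
  (forall b x, phi_comp phi b x -> hom_comp deg1 b (psi x)) /\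
  (forall b y, hom_comp deg1 b y -> exists2 x, phi_comp phi b x & psi x = y).

Definition z2_iso (phi : gT F -> gT F) (deg1 : pred nat) : Prop :=
  exists psi, alg_aut psi /\ z2_maps phi psi deg1.

End Grassmann.

(* Homogeneous gradings (0-based indices; paper's e_m is our e_(m-1)):
   E_k    : e_1..e_k degree 0, others 1  -> our i of degree 1 iff k <= i
   E_k*   : e_1..e_k degree 1, others 0  -> our i of degree 1 iff i < k
   E_inf  : paper e_m degree 1 iff m odd  -> our i of degree 1 iff i even *)
Definition deg_Ek (k : nat) : pred nat := fun i => (k <= i)%N.
Definition deg_Ekstar (k : nat) : pred nat := fun i => (i < k)%N.
Definition deg_Einf : pred nat := fun i => ~~ odd i.

(* Main.v *)
Require Import Defs.
From HB Require Import structures.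
From mathcomp Require Import all_boot all_order all_algebra.
From mathcomp Require Import finmap.
From mathcomp Require Import zify ring.
From Stdlib Require Import FunctionalExtensionality ClassicalEpsilon Lia.
Set Implicit Arguments. Unset Strict Implicit. Unset Printing Implicit Defensive.
Import Order.TTheory GRing.Theory Num.Theory.
Local Open Scope fset_scope.
Local Open Scope ring_scope.

Section G.
Variable F : fieldType.
Local Notation gT := (gT F).
Local Notation gmul := (@gmul F).
Local Notation gadd := (@gadd F).
Local Notation gscale := (@gscale F).

Definition mon (A : {fset nat}) : gT := fun C => (C == A)%:R.
Definition gzero : gT := fun _ => 0.
Definition gsum (I : Type) (s : seq I) (f : I -> gT) : gT :=
  fun C => \sum_(i <- s) f i C.

Lemma gmul_monl A y C : gmul (mon A) y C =
  if A `<=` C then (-1) ^+ ginv A (C `\` A) * y (C `\` A) else 0.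
Proof.
rewrite /gmul; case: ifP => sAC.
  rewrite (bigD1_seq A) /= ?fpowersetE ?fset_uniq // /mon eqxx mulr1.
  by rewrite big1 ?addr0 // => B /negbTE ->; rewrite mulr0 mul0r.
rewrite big_seq big1 // => B; rewrite fpowersetE /mon => sBC.
by case: eqP => [eBA|]; [rewrite eBA sAC in sBC | rewrite mulr0 mul0r].
Qed.

Lemma gmul_monr x B C : gmul x (mon B) C =
  if B `<=` C then (-1) ^+ ginv (C `\` B) B * x (C `\` B) else 0.
Proof.
rewrite /gmul; case: ifP => sBC.
  rewrite (bigD1_seq (C `\` B)) /= ?fpowersetE ?fset_uniq ?fsubsetDl //.
  rewrite fsetDK // /mon eqxx mulr1 big_seq_cond big1 ?addr0 // => A.
  rewrite fpowersetE => /andP [sAC nA].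
  case: eqP => [eA|]; last by rewrite mulr0.
  by rewrite -eA fsetDK // eqxx in nA.
rewrite big_seq big1 // => A; rewrite fpowersetE /mon => sAC.
case: eqP => [eA|]; last by rewrite mulr0.
by rewrite -eA fsubsetDl in sBC.
Qed.
Lemma fsetUDA (A C : {fset nat}) : A `<=` C -> A `|` (C `\` A) = C.
Proof.
move=> /fsubsetP sAC; apply/fsetP => x; rewrite !inE.
by case: (boolP (x \in A)) => [/sAC ->|]; rewrite ?orbT.
Qed.

Lemma fdisjD (A C : {fset nat}) : [disjoint A & C `\` A]%fset.
Proof. by apply/fdisjointP => x xA; rewrite !inE xA. Qed.

Lemma fsetUKD (A B : {fset nat}) : [disjoint A & B]%fset -> (A `|` B) `\` A = B.
Proof.
move=> /fdisjointP dAB; apply/fsetP => x; rewrite !inE.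
case: (boolP (x \in A)) => [xA|] /=; last by [].
by rewrite (negbTE (dAB x xA)).
Qed.

Lemma gmul_mon A B : gmul (mon A) (mon B) =
  if [disjoint A & B]%fset then gscale ((-1) ^+ ginv A B) (mon (A `|` B)) else gzero.
Proof.
apply: functional_extensionality => C; rewrite gmul_monl /gscale /mon /gzero.
case: (boolP [disjoint A & B]%fset) => dAB.
  case: (eqVneq C (A `|` B)) => [->|nC].
    by rewrite fsubsetUl fsetUKD // eqxx.
  case: ifP => sAC; last by rewrite mulr0.
  case: (eqVneq (C `\` A) B) => [eB|nB]; last by rewrite !mulr0.
  by rewrite -eB fsetUDA // eqxx in nC.
case: ifP => // sAC.
case: (eqVneq (C `\` A) B) => [eB|nB]; last by rewrite !mulr0.
by rewrite -eB fdisjD in dAB.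
Qed.
Lemma gmul_suml (I : Type) (s : seq I) (f : I -> gT) y :
  gmul (gsum s f) y = gsum s (fun i => gmul (f i) y).
Proof.
apply: functional_extensionality => C; rewrite /gmul /gsum exchange_big.
apply: eq_bigr => A _; rewrite mulr_sumr big_distrl; apply: eq_bigr => i _.
by [].
Qed.

Lemma gmul_sumr (I : Type) (s : seq I) (f : I -> gT) x :
  gmul x (gsum s f) = gsum s (fun i => gmul x (f i)).
Proof.
apply: functional_extensionality => C; rewrite /gmul /gsum exchange_big.
by apply: eq_bigr => A _; rewrite mulr_sumr.
Qed.

Lemma gmul_scalel c x y : gmul (gscale c x) y = gscale c (gmul x y).
Proof.
apply: functional_extensionality => C; rewrite /gmul /gscale mulr_sumr.
by apply: eq_bigr => A _; rewrite /gscale !mulrA [_ * c]mulrC.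
Qed.

Lemma gmul_scaler c x y : gmul x (gscale c y) = gscale c (gmul x y).
Proof.
apply: functional_extensionality => C; rewrite /gmul /gscale mulr_sumr.
by apply: eq_bigr => A _; rewrite /gscale mulrA [_ * c]mulrC !mulrA.
Qed.

Lemma gmul0l y : gmul gzero y = gzero.
Proof.
apply: functional_extensionality => C; rewrite /gmul /gzero.
by rewrite big1 // => A _; rewrite mulr0 mul0r.
Qed.

Lemma gmul0r x : gmul x gzero = gzero.
Proof.
apply: functional_extensionality => C; rewrite /gmul /gzero.
by rewrite big1 // => A _; rewrite mulr0.
Qed.

Lemma eq_gsum (I : Type) (s : seq I) (f g : I -> gT) :
  (forall i, f i = g i) -> gsum s f = gsum s g.
Proof. by move=> e; apply: functional_extensionality => C; apply: eq_bigr => i _; rewrite e. Qed.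

Definition covers (S : seq {fset nat}) (x : gT) := forall A, A \notin S -> x A = 0.

Lemma gfin_covers x : gfin x -> exists S, uniq S /\ covers S x.
Proof.
case=> S hS; exists (undup S); split; first exact: undup_uniq.
by move=> A; rewrite mem_undup; apply: hS.
Qed.

Definition dec (S : seq {fset nat}) (x : gT) := gsum S (fun A => gscale (x A) (mon A)).

Lemma decE S x : uniq S -> covers S x -> x = dec S x.
Proof.
move=> uS cS; apply: functional_extensionality => C; rewrite /dec /gsum /gscale /mon.
case: (boolP (C \in S)) => CS.
  rewrite (bigD1_seq C) //= eqxx mulr1 big1 ?addr0 // => A nA.
  by rewrite eq_sym (negbTE nA) mulr0.
rewrite cS // big1_seq // => A /andP [_ AS].
case: (eqVneq C A) => [eCA|_]; last by rewrite mulr0.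
by rewrite eCA AS in CS.
Qed.

Lemma perm_fsetU (A B : {fset nat}) : [disjoint A & B]%fset ->
  perm_eq (A `|` B) (enum_fset A ++ enum_fset B).
Proof.
move=> dAB; apply: uniq_perm; first exact: fset_uniq.
  rewrite cat_uniq !fset_uniq /= andbT; apply/hasPn => x xB /=.
  by move/fdisjointP: dAB => h; apply/negP => xA; move: (h x xA); rewrite xB.
by move=> x; rewrite mem_cat inE.
Qed.

Lemma ginv_Ul A B C : [disjoint A & B]%fset -> ginv (A `|` B) C = (ginv A C + ginv B C)%N.
Proof. by move=> dAB; rewrite /ginv (perm_big _ (perm_fsetU dAB)) big_cat. Qed.

Lemma ginv_Ur A B C : [disjoint B & C]%fset -> ginv A (B `|` C) = (ginv A B + ginv A C)%N.
Proof.
move=> dBC; rewrite /ginv -big_split /=; apply: eq_bigr => a _.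
by rewrite (perm_big _ (perm_fsetU dBC)) big_cat.
Qed.

Lemma gmul_mon3 A B C :
  gmul (gmul (mon A) (mon B)) (mon C) = gmul (mon A) (gmul (mon B) (mon C)).
Proof.
rewrite !gmul_mon.
case: (boolP [disjoint A & B]%fset) => dAB; case: (boolP [disjoint B & C]%fset) => dBC;
  rewrite ?gmul_scalel ?gmul_scaler ?gmul0l ?gmul0r ?gmul_mon.
- rewrite fdisjointUX fdisjointXU dAB dBC andbT /= fsetUA.
  case: (boolP [disjoint A & C]%fset) => dAC /=; last by
    apply: functional_extensionality => D; rewrite /gscale /gzero !mulr0.
  apply: functional_extensionality => D; rewrite /gscale !mulrA -!exprD.
  by rewrite ginv_Ul // ginv_Ur //; congr (_ ^+ _ * _); lia.
- rewrite fdisjointUX (negbTE dBC) andbF.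
  by apply: functional_extensionality => D; rewrite /gscale /gzero mulr0.
- rewrite fdisjointXU (negbTE dAB).
  by apply: functional_extensionality => D; rewrite /gscale /gzero mulr0.
- by [].
Qed.
Lemma gfin0 : gfin gzero. Proof. by exists [::]. Qed.

Lemma gfin_mon A : gfin (mon A).
Proof. by exists [:: A] => C; rewrite inE /mon => /negbTE ->. Qed.

Lemma gfin_add x y : gfin x -> gfin y -> gfin (gadd x y).
Proof.
case=> S hS [T hT]; exists (S ++ T) => A; rewrite mem_cat negb_or => /andP [aS aT].
by rewrite /gadd hS // hT // addr0.
Qed.

Lemma gfin_scale c x : gfin x -> gfin (gscale c x).
Proof. by case=> S hS; exists S => A aS; rewrite /gscale hS // mulr0. Qed.

Lemma gsum_cons (I : Type) (i : I) s f : gsum (i :: s) f = gadd (f i) (gsum s f).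
Proof. by apply: functional_extensionality => C; rewrite /gsum big_cons. Qed.

Lemma gsum_nil (I : Type) f : gsum (@nil I) f = gzero.
Proof. by apply: functional_extensionality => C; rewrite /gsum big_nil. Qed.

Lemma gfin_sum (I : Type) (s : seq I) f : (forall i, gfin (f i)) -> gfin (gsum s f).
Proof.
move=> h; elim: s => [|i s IH]; first by rewrite gsum_nil; exact: gfin0.
by rewrite gsum_cons; apply: gfin_add.
Qed.

Lemma gfin_gmul x y : gfin x -> gfin y -> gfin (gmul x y).
Proof.
move=> /gfin_covers [S [uS cS]] /gfin_covers [T [uT cT]].
rewrite (decE uS cS) (decE uT cT) /dec gmul_suml; apply: gfin_sum => A.
rewrite gmul_scalel; apply: gfin_scale; rewrite gmul_sumr; apply: gfin_sum => B.
rewrite gmul_scaler gmul_mon; apply: gfin_scale; case: ifP => _; last exact: gfin0.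
by apply: gfin_scale; apply: gfin_mon.
Qed.

Lemma gmul_assoc_mm A B z : gfin z ->
  gmul (gmul (mon A) (mon B)) z = gmul (mon A) (gmul (mon B) z).
Proof.
move=> /gfin_covers [S [uS cS]]; rewrite (decE uS cS) /dec !gmul_sumr.
apply: eq_gsum => C; by rewrite !gmul_scaler gmul_mon3.
Qed.

Lemma gmul_assoc_m A y z : gfin y -> gfin z ->
  gmul (gmul (mon A) y) z = gmul (mon A) (gmul y z).
Proof.
move=> /gfin_covers [S [uS cS]] fz; rewrite (decE uS cS) /dec gmul_sumr !gmul_suml gmul_sumr.
apply: eq_gsum => B; by rewrite gmul_scaler !gmul_scalel gmul_scaler gmul_assoc_mm.
Qed.

Lemma gmul_assoc x y z : gfin x -> gfin y -> gfin z ->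
  gmul (gmul x y) z = gmul x (gmul y z).
Proof.
move=> /gfin_covers [S [uS cS]] fy fz; rewrite (decE uS cS) /dec !gmul_suml.
apply: eq_gsum => A; by rewrite !gmul_scalel gmul_assoc_m.
Qed.
Lemma gmul1l x : gmul (gone F) x = x.
Proof.
apply: functional_extensionality => C; rewrite (_ : gone F = mon fset0) //.
by rewrite gmul_monl fsub0set fsetD0 /ginv big_seq_fset0 expr0 mul1r.
Qed.

Lemma gmul1r x : gmul x (gone F) = x.
Proof.
apply: functional_extensionality => C; rewrite (_ : gone F = mon fset0) //.
rewrite gmul_monr fsub0set fsetD0 /ginv big1 ?expr0 ?mul1r // => a _.
by rewrite big_seq_fset0.
Qed.

Lemma ginv_swap A B : [disjoint A & B]%fset ->
  (ginv A B + ginv B A = #|` A| * #|` B|)%N.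
Proof.
move=> /fdisjointP dAB; rewrite /ginv [X in (_ + X)%N]exchange_big /= -big_split /=.
rewrite card_fset_sum1 big_distrl /=; rewrite !big_seq; apply: eq_bigr => a aA.
rewrite -big_split /= card_fset_sum1 mul1n !big_seq; apply: eq_bigr => b bB.
have nab : a != b by apply/negP => /eqP eab; move: (dAB a aA); rewrite eab bB.
by case: ltngtP nab => //; rewrite eq_sym => ->.
Qed.

Lemma sign_swap A B : [disjoint A & B]%fset ->
  (-1) ^+ ginv A B = (-1) ^+ (#|` A| * #|` B|) * ((-1) ^+ ginv B A :> F).
Proof.
move=> dAB; rewrite -exprD -(ginv_swap dAB) -[LHS]signr_odd -[RHS]signr_odd.
by rewrite !oddD -addbA addbb addbF.
Qed.

Lemma gmul_monC A B : gmul (mon A) (mon B) =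
  gscale ((-1) ^+ (#|` A| * #|` B|)) (gmul (mon B) (mon A)).
Proof.
rewrite !gmul_mon fdisjoint_sym; case: ifP => dBA.
  rewrite fsetUC; apply: functional_extensionality => C; rewrite /gscale mulrA.
  by rewrite -sign_swap // fdisjoint_sym.
by apply: functional_extensionality => C; rewrite /gscale /gzero mulr0.
Qed.

Definition oddel (x : gT) := gfin x /\ forall A, x A != 0 -> odd #|` A|.

Lemma gsum_exchange (S T : seq {fset nat}) (f : {fset nat} -> {fset nat} -> gT) :
  gsum S (fun A => gsum T (f A)) = gsum T (fun B => gsum S (fun A => f A B)).
Proof. by apply: functional_extensionality => C; rewrite /gsum exchange_big. Qed.

Lemma gscale_sum c (I : Type) (s : seq I) f :
  gscale c (gsum s f) = gsum s (fun i => gscale c (f i)).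
Proof. by apply: functional_extensionality => C; rewrite /gscale /gsum mulr_sumr. Qed.

Lemma gscaleA c c' x : gscale c (gscale c' x) = gscale (c * c') x.
Proof. by apply: functional_extensionality => C; rewrite /gscale mulrA. Qed.

Lemma gmul_dec S T x y : gmul (dec S x) (dec T y) =
  gsum S (fun A => gsum T (fun B => gscale (x A * y B) (gmul (mon A) (mon B)))).
Proof.
rewrite /dec gmul_suml; apply: eq_gsum => A; rewrite gmul_scalel gmul_sumr gscale_sum.
by apply: eq_gsum => B; rewrite gmul_scaler gscaleA.
Qed.

Lemma gmul_anti x y : oddel x -> oddel y -> gmul x y = gopp (gmul y x).
Proof.
move=> [/gfin_covers [S [uS cS]] ox] [/gfin_covers [T [uT cT]] oy].
rewrite {1 2}(decE uS cS) {1 2}(decE uT cT) !gmul_dec /gopp gscale_sum.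
under [RHS]eq_gsum => B do rewrite gscale_sum.
rewrite [RHS]gsum_exchange; apply: eq_gsum => A.
apply: eq_gsum => B; rewrite gscaleA.
case: (eqVneq (x A) 0) => [->|xA].
  by apply: functional_extensionality => C; rewrite /gscale !(mul0r, mulr0).
case: (eqVneq (y B) 0) => [->|yB].
  by apply: functional_extensionality => C; rewrite /gscale !(mul0r, mulr0).
rewrite gmul_monC gscaleA; congr gscale.
rewrite -[X in _ * X]signr_odd oddM (ox _ xA) (oy _ yB).
by rewrite /= expr1 mulrN1 mulN1r mulrC.
Qed.

End G.

Section G2.
Variable F : fieldType.
Local Notation gT := (gT F).
Local Notation gmul := (@gmul F).
Local Notation gadd := (@gadd F).
Local Notation gscale := (@gscale F).

Lemma sort_cons (b : nat) (X : {fset nat}) : (forall x, x \in X -> (b < x)%N) ->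
  sort leq (b |` X) = b :: sort leq X.
Proof.
move=> hX; apply: (sorted_eq leq_trans anti_leq).
- exact: sort_sorted leq_total _.
- rewrite /= path_sortedE; last exact: leq_trans.
  rewrite sort_sorted ?andbT; last exact: leq_total.
  by apply/allP => x; rewrite mem_sort => /hX /ltnW.
apply: uniq_perm.
- by rewrite sort_uniq fset_uniq.
- rewrite /= sort_uniq fset_uniq andbT mem_sort; apply/negP => /hX.
  by rewrite ltnn.
by move=> x; rewrite in_cons !mem_sort !inE.
Qed.

Lemma sort_fset0 : sort leq (fset0 : {fset nat}) = [::].
Proof. by apply: size0nil; rewrite size_sort cardfs0. Qed.

Lemma fset_min_ind (P : {fset nat} -> Prop) : P fset0 ->
  (forall b X, (forall x, x \in X -> (b < x)%N) -> P X -> P (b |` X)) ->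
  forall A, P A.
Proof.
move=> P0 PS A; move: {2}(sort leq A) (erefl (sort leq A)) => l.
elim: l A => [|b l IH] A eA.
  suff -> : A = fset0 by [].
  by apply/eqP; rewrite -cardfs_eq0 -(size_sort leq) eA.
have bA : b \in A by rewrite -(mem_sort leq) eA inE eqxx.
have sl : sorted leq (b :: l) by rewrite -eA; exact: (sort_sorted leq_total).
have ul : uniq (b :: l) by rewrite -eA sort_uniq fset_uniq.
have hX : forall x, x \in A `\ b -> (b < x)%N.
  move=> x; rewrite !inE => /andP [nxb xA].
  have : x \in l by move: xA; rewrite -(mem_sort leq) eA inE (negbTE nxb).
  move: sl; rewrite /= path_sortedE; last exact: leq_trans.
  case/andP => /allP h _ /h; rewrite leq_eqVlt eq_sym (negbTE nxb) //.
rewrite -(fsetD1K bA); apply: PS => //; apply: IH.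
have := sort_cons hX; rewrite fsetD1K // eA => -[] //.
Qed.
Definition monol (g : nat -> gT) (l : seq nat) : gT :=
  foldr (fun a acc => gmul (g a) acc) (gone F) l.
Definition mono (g : nat -> gT) (A : {fset nat}) : gT := monol g (sort leq A).

Lemma mono0 g : mono g fset0 = gone F.
Proof. by rewrite /mono sort_fset0. Qed.

Lemma mono_cons g b X : (forall x, x \in X -> (b < x)%N) ->
  mono g (b |` X) = gmul (g b) (mono g X).
Proof. by move=> hX; rewrite /mono sort_cons. Qed.

Lemma mono1 g i : mono g [fset i] = g i.
Proof.
rewrite -[[fset i]]fsetU0 mono_cons ?mono0 ?gmul1r // => x; by rewrite inE.
Qed.

Lemma gfin_one : gfin (gone F).
Proof. exact: (gfin_mon F fset0). Qed.

Definition valid (g : nat -> gT) := forall i, oddel (g i).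

Lemma gfin_mono g A : (forall i, gfin (g i)) -> gfin (mono g A).
Proof.
move=> hg; rewrite /mono; elim: (sort _ _) => [|a l IH] /=; first exact: gfin_one.
exact: gfin_gmul.
Qed.

Variable two0 : (2%:R : F) != 0.

Lemma gmul_sq x : oddel x -> gmul x x = gzero F.
Proof.
move=> ox; have e := gmul_anti ox ox.
apply: functional_extensionality => C; have := congr1 (fun f => f C) e.
rewrite /gopp /gscale /gzero mulN1r => /eqP; rewrite -subr_eq0 opprK -mulr2n.
by rewrite -mulr_natr mulf_eq0 (negbTE two0) orbF => /eqP.
Qed.

Lemma ginv0l B : ginv fset0 B = 0%N.
Proof. by rewrite /ginv big_seq_fset0. Qed.

Lemma ginv0r A : ginv A fset0 = 0%N.
Proof. by rewrite /ginv big1 // => a _; rewrite big_seq_fset0. Qed.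

Lemma ginv11 a b : ginv [fset a] [fset b] = (b < a)%N.
Proof. by rewrite /ginv !big_seq_fset1. Qed.

Lemma ginv1_small a X : (forall x, x \in X -> (a < x)%N) -> ginv [fset a] X = 0%N.
Proof.
move=> hX; rewrite /ginv big_seq_fset1 big_seq big1 // => x /hX.
by rewrite ltnNge => /negbTE; rewrite leq_eqVlt => /norP [_ /negbTE ->].
Qed.

Lemma gscale1 x : gscale 1 x = x.
Proof. by apply: functional_extensionality => C; rewrite /gscale mul1r. Qed.

Lemma gscale0r c : gscale c (gzero F) = gzero F.
Proof. by apply: functional_extensionality => C; rewrite /gscale /gzero mulr0. Qed.

Section Valid.
Variable g : nat -> gT.
Hypothesis vg : valid g.
Let fg i : gfin (g i) := (vg i).1.
Let gfm X : gfin (mono g X) := gfin_mono X fg.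
Ltac gf := try solve [exact: fg | exact: gfm | apply: gfin_gmul; [exact: fg|exact: gfm]].

Lemma mono_gen1 a B : gmul (g a) (mono g B) =
  if a \in B then gzero F
  else gscale ((-1) ^+ ginv [fset a] B) (mono g (a |` B)).
Proof.
elim/fset_min_ind: B a => [|b X hX IH] a.
  by rewrite in_fset0 ginv0r expr0 gscale1 mono_cons ?mono0 // => x; rewrite in_fset0.
rewrite mono_cons // -gmul_assoc; gf.
case: (eqVneq a b) => [->|neab].
  by rewrite gmul_sq // gmul0l !inE eqxx.
case: (ltngtP a b) => [ab|ba|]; last by move/eqP: neab.
- have nab : a \notin b |` X.
    rewrite !inE negb_or; apply/andP; split; first by rewrite neq_ltn ab.
    by apply/negP => /hX; rewrite ltnNge => /negP; apply; apply: ltnW.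
  rewrite (negbTE nab) ginv1_small ?expr0 ?gscale1; last first.
    by move=> x; rewrite !inE => /orP [/eqP ->|/hX]; [|apply: ltn_trans].
  rewrite [X in _ = X]mono_cons ?mono_cons ?gmul_assoc //; gf.
  by move=> x; rewrite !inE => /orP [/eqP ->|/hX]; [|apply: ltn_trans].
- rewrite (gmul_anti (vg a) (vg b)) /gopp gmul_scalel gmul_assoc; gf.
  rewrite IH !inE (gtn_eqF ba) /=; case: ifP => aX; first by rewrite gmul0r gscale0r.
  rewrite gmul_scaler gscaleA ginv_Ur ?fdisjoint1X ?aX //.
  rewrite ginv11 ba exprD expr1 fsetUCA [in RHS]mono_cons //.
  move=> x; rewrite !inE => /orP [/eqP ->|/hX] //.
  by apply/negP => /hX; rewrite ltnn.
Qed.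
Lemma mono_mul A B : gmul (mono g A) (mono g B) =
  if [disjoint A & B]%fset then gscale ((-1) ^+ ginv A B) (mono g (A `|` B))
  else gzero F.
Proof.
elim/fset_min_ind: A B => [|a X hX IH] B.
  by rewrite mono0 gmul1l fdisjoint0X ginv0l expr0 gscale1 fset0U.
have aX : a \notin X by apply/negP => /hX; rewrite ltnn.
rewrite mono_cons // gmul_assoc; gf.
rewrite IH fdisjointUX fdisjoint1X.
case: (boolP [disjoint X & B]%fset) => dXB; last by rewrite gmul0r andbF.
rewrite gmul_scaler mono_gen1 in_fsetU (negbTE aX) /= andbT.
case: (boolP (a \in B)) => aB /=; first by rewrite gscale0r.
rewrite gscaleA ginv_Ul ?fdisjoint1X // ginv_Ur // ginv1_small // add0n.
by rewrite fsetUA -exprD addnC.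
Qed.
End Valid.
End G2.

Section G3.
Variable F : fieldType.
Local Notation gT := (gT F).
Local Notation gmul := (@gmul F).
Local Notation gadd := (@gadd F).
Local Notation gscale := (@gscale F).
Local Notation gzero := (gzero F).
Local Notation mon := (mon F).

Definition supp (x : gT) : seq {fset nat} :=
  match excluded_middle_informative (gfin x) with
  | left H => undup (proj1_sig (constructive_indefinite_description _ H))
  | right _ => [::] end.

Lemma supp_uniq x : uniq (supp x).
Proof. by rewrite /supp; case: excluded_middle_informative => // H; exact: undup_uniq. Qed.

Lemma supp_covers x : gfin x -> covers (supp x) x.
Proof.
rewrite /supp; case: excluded_middle_informative => // H _.
case: constructive_indefinite_description => S hS /= A; rewrite mem_undup; exact: hS.
Qed.

Definition lin (f : {fset nat} -> gT) (x : gT) S := gsum S (fun A => gscale (x A) (f A)).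

Lemma lin_filter f x S C : uniq S -> covers S x ->
  lin f x S C = \sum_(A <- [seq A <- S | x A != 0]) x A * f A C.
Proof.
move=> uS cS; rewrite /lin /gsum /gscale big_filter.
rewrite [LHS](bigID (fun A => x A != 0)) /= [X in _ + X]big1 ?addr0 //.
by move=> A; rewrite negbK => /eqP ->; rewrite mul0r.
Qed.

Lemma lin_indep f x S T : uniq S -> uniq T -> covers S x -> covers T x ->
  lin f x S = lin f x T.
Proof.
move=> uS uT cS cT; apply: functional_extensionality => C.
rewrite !lin_filter //; apply: perm_big; apply: uniq_perm; rewrite ?filter_uniq //.
move=> A; rewrite !mem_filter; case: (eqVneq (x A) 0) => //= xA.
case: (boolP (A \in S)) => AS; case: (boolP (A \in T)) => AT //.
  by move: xA; rewrite cT // eqxx.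
by move: xA; rewrite cS // eqxx.
Qed.

Definition sub (g : nat -> gT) (x : gT) : gT := lin (mono g) x (supp x).

Lemma sub_lin g x S : uniq S -> covers S x -> gfin x -> sub g x = lin (mono g) x S.
Proof. move=> uS cS fx; apply: lin_indep => //; [exact: supp_uniq|exact: supp_covers]. Qed.

Lemma covers_add S x y : covers S x -> covers S y -> covers S (gadd x y).
Proof. by move=> cx cy A AS; rewrite /gadd cx // cy // addr0. Qed.

Lemma covers_scale S c x : covers S x -> covers S (gscale c x).
Proof. by move=> cx A AS; rewrite /gscale cx // mulr0. Qed.

Lemma sub_add g x y : gfin x -> gfin y -> sub g (gadd x y) = gadd (sub g x) (sub g y).
Proof.
move=> fx fy; set S := undup (supp x ++ supp y).
have uS : uniq S by apply: undup_uniq.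
have cx : covers S x by move=> A; rewrite mem_undup mem_cat negb_or => /andP [h _];
  apply: supp_covers.
have cy : covers S y by move=> A; rewrite mem_undup mem_cat negb_or => /andP [_ h];
  apply: supp_covers.
rewrite (sub_lin _ uS (covers_add cx cy) (gfin_add fx fy)) (sub_lin _ uS cx fx).
rewrite (sub_lin _ uS cy fy); apply: functional_extensionality => C.
by rewrite /lin /gsum /gadd /gscale -big_split; apply: eq_bigr => A _; rewrite mulrDl.
Qed.

Lemma sub_scale g c x : gfin x -> sub g (gscale c x) = gscale c (sub g x).
Proof.
move=> fx; have cx := supp_covers fx.
rewrite (sub_lin _ (supp_uniq x) (covers_scale c cx) (gfin_scale c fx)).
apply: functional_extensionality => C.
by rewrite /sub /lin /gsum /gscale mulr_sumr; apply: eq_bigr => A _; rewrite mulrA.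
Qed.

Lemma sub_zero g : sub g gzero = gzero.
Proof.
rewrite (@sub_lin _ _ [::]) //; last exact: gfin0.
by apply: functional_extensionality => C; rewrite /lin /gsum big_nil.
Qed.

Lemma sub_mon g A : sub g (mon A) = mono g A.
Proof.
rewrite (@sub_lin _ _ [:: A]) //; last exact: gfin_mon.
  apply: functional_extensionality => C.
  by rewrite /lin /gsum big_cons big_nil /gscale /mon eqxx mul1r addr0.
by move=> B; rewrite inE /mon => /negbTE ->.
Qed.

Lemma sub_gsum g (I : Type) (s : seq I) f : (forall i, gfin (f i)) ->
  sub g (gsum s f) = gsum s (fun i => sub g (f i)).
Proof.
move=> hf; elim: s => [|i s IH]; first by rewrite !gsum_nil sub_zero.
by rewrite !gsum_cons sub_add ?IH //; apply: gfin_sum.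
Qed.

Lemma gfin_sub g x : (forall i, gfin (g i)) -> gfin (sub g x).
Proof.
move=> hg; apply: gfin_sum => A; apply: gfin_scale; exact: gfin_mono.
Qed.

Lemma gmul_lin f h x y S T : gmul (lin f x S) (lin h y T) =
  gsum S (fun A => gsum T (fun B => gscale (x A * y B) (gmul (f A) (h B)))).
Proof.
rewrite /lin gmul_suml; apply: eq_gsum => A; rewrite gmul_scalel gmul_sumr gscale_sum.
by apply: eq_gsum => B; rewrite gmul_scaler gscaleA.
Qed.

Variable two0 : (2%:R : F) != 0.

Lemma sub_mul g x y : valid g -> gfin x -> gfin y ->
  sub g (gmul x y) = gmul (sub g x) (sub g y).
Proof.
move=> vg fx fy.
have [S [uS cS]] := gfin_covers fx; have [T [uT cT]] := gfin_covers fy.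
rewrite (sub_lin g uS cS fx) (sub_lin g uT cT fy) gmul_lin.
rewrite {1}(decE uS cS) {1}(decE uT cT) gmul_dec sub_gsum; last first.
  move=> A; apply: gfin_sum => B; apply: gfin_scale; apply: gfin_gmul; exact: gfin_mon.
apply: eq_gsum => A; rewrite sub_gsum; last first.
  move=> B; apply: gfin_scale; apply: gfin_gmul; exact: gfin_mon.
apply: eq_gsum => B; rewrite sub_scale; last by apply: gfin_gmul; exact: gfin_mon.
rewrite gmul_mon (mono_mul two0 vg); case: ifP => _; last by rewrite sub_zero.
by rewrite sub_scale ?sub_mon //; exact: gfin_mon.
Qed.

Lemma sub_one g : sub g (gone F) = gone F.
Proof. by rewrite (_ : gone F = mon fset0) // sub_mon mono0. Qed.

Lemma alg_endo_sub g : valid g -> alg_endo (sub g).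
Proof.
move=> vg; split.
- by move=> x _; apply: gfin_sub => i; case: (vg i).
- exact: sub_add.
- by move=> c x fx; apply: sub_scale.
- by move=> x y; apply: sub_mul.
- exact: sub_one.
Qed.

Lemma endo0 (f : gT -> gT) : alg_endo f -> f gzero = gzero.
Proof.
case=> _ _ hs _ _; have -> : gzero = gscale 0 gzero.
  by apply: functional_extensionality => C; rewrite /gscale mul0r.
rewrite hs; last exact: gfin0.
by apply: functional_extensionality => C; rewrite /gscale !mul0r.
Qed.

Lemma endo_gsum (f : gT -> gT) (I : Type) (s : seq I) (h : I -> gT) : alg_endo f -> (forall i, gfin (h i)) ->
  f (gsum s h) = gsum s (fun i => f (h i)).
Proof.
move=> ef hf; elim: s => [|i s IH]; first by rewrite !gsum_nil endo0.
case: ef => _ ha _ _ _.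
by rewrite !gsum_cons ha ?IH //; apply: gfin_sum.
Qed.

Lemma endo_mono (f : gT -> gT) (g : nat -> gT) A : alg_endo f -> (forall i, gfin (g i)) ->
  f (mono g A) = mono (fun i => f (g i)) A.
Proof.
move=> ef hg; elim/fset_min_ind: A => [|b X hX IH]; first by rewrite !mono0; case: ef.
rewrite !mono_cons //; case: ef => _ _ _ hm _.
by rewrite hm ?IH //; apply: gfin_mono.
Qed.

Lemma mono_gen A : mono (gen F) A = mon A.
Proof.
elim/fset_min_ind: A => [|b X hX IH]; first by rewrite mono0.
rewrite mono_cons // IH (_ : gen F b = mon [fset b]) // gmul_mon fdisjoint1X.
have -> : b \notin X by apply/negP => /hX; rewrite ltnn.
by rewrite ginv1_small // expr0 gscale1.
Qed.

Lemma endo_unique (f : gT -> gT) (g : nat -> gT) : alg_endo f -> (forall i, f (gen F i) = g i) ->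
  forall x, gfin x -> f x = sub g x.
Proof.
move=> ef hfg x fx; have [S [uS cS]] := gfin_covers fx.
rewrite (sub_lin g uS cS fx) {1}(decE uS cS) /dec endo_gsum //; last first.
  by move=> A; apply: gfin_scale; apply: gfin_mon.
apply: eq_gsum => A; case: (ef) => _ _ hs _ _; rewrite hs; last exact: gfin_mon.
rewrite -mono_gen endo_mono //; last by move=> i; apply: gfin_mon.
by rewrite (functional_extensionality _ _ hfg).
Qed.

Lemma valid_gen : valid (gen F).
Proof.
move=> i; split; first exact: gfin_mon.
move=> A; rewrite /gen; case: (eqVneq A [fset i]) => [->|_]; first by rewrite cardfs1.
by rewrite mulr0n eqxx.
Qed.

Lemma alg_endo_id : alg_endo (@id gT).
Proof. by split. Qed.

Lemma sub_id x : gfin x -> sub (gen F) x = x.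
Proof. by move=> fx; rewrite -(endo_unique alg_endo_id (fun i => erefl) fx). Qed.

Lemma sub_gen (g : nat -> gT) i : sub g (gen F i) = g i.
Proof. by rewrite (_ : gen F i = mon [fset i]) // sub_mon mono1. Qed.

Lemma alg_endo_comp (f h : gT -> gT) : alg_endo f -> alg_endo h -> alg_endo (f \o h).
Proof.
case=> f1 f2 f3 f4 f5 [h1 h2 h3 h4 h5]; split => /=.
- by move=> x fx; apply: f1; apply: h1.
- by move=> x y fx fy; rewrite h2 // f2 //; apply: h1.
- by move=> c x fx; rewrite h3 // f3 //; apply: h1.
- by move=> x y fx fy; rewrite h4 // f4 //; apply: h1.
- by rewrite h5 f5.
Qed.

Lemma sub_inv (g h : nat -> gT) : valid g -> valid h -> (forall i, sub g (h i) = gen F i) ->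
  forall x, gfin x -> sub g (sub h x) = x.
Proof.
move=> vg vh e x fx.
have := endo_unique (alg_endo_comp (alg_endo_sub vg) (alg_endo_sub vh)) (g := gen F).
move=> /(_ _ x fx) /= ->; first exact: sub_id.
by move=> i /=; rewrite sub_gen e.
Qed.

Lemma alg_aut_sub (g h : nat -> gT) : valid g -> valid h -> (forall i, sub g (h i) = gen F i) ->
  (forall i, sub h (g i) = gen F i) -> alg_aut (sub g).
Proof.
move=> vg vh e1 e2; split; first exact: alg_endo_sub.
  move=> x y fx fy exy; by rewrite -(sub_inv vh vg e2 fx) exy sub_inv.
move=> y fy; exists (sub h y); first by apply: gfin_sub => i; case: (vh i).
exact: sub_inv.
Qed.
End G3.

Section G4.
Variable F : fieldType.
Local Notation gT := (gT F).
Local Notation gmul := (@gmul F).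
Local Notation gadd := (@gadd F).
Local Notation gscale := (@gscale F).
Local Notation gzero := (gzero F).
Local Notation mon := (mon F).
Variable two0 : (2%:R : F) != 0.

Lemma N1_neq1 : (-1 : F) != 1.
Proof.
by rewrite -subr_eq0 -opprD oppr_eq0 -mulr2n.
Qed.

Definition gD (D : pred nat) (i : nat) : gT :=
  if D i then gopp (gen F i) else gen F i.
Definition hinv (D : pred nat) := sub (gD D).
Definition cnt (D : pred nat) (A : {fset nat}) := #|` [fset a in A | D a]|.

Lemma oddel_scale c x : oddel x -> oddel (gscale c x).
Proof.
case=> fx ox; split; first exact: gfin_scale.
by move=> A; rewrite /gscale mulf_eq0 negb_or => /andP [_ /ox].
Qed.

Lemma valid_gD D : valid (gD D).
Proof. by move=> i; rewrite /gD; case: (D i); [apply: oddel_scale|]; apply: valid_gen. Qed.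

Lemma cnt_cons D b X : b \notin X -> cnt D (b |` X) = (D b + cnt D X)%N.
Proof.
move=> bX; rewrite /cnt; case: (boolP (D b)) => Db /=.
  rewrite (_ : 1%N = (b \notin [fset a in X | D a])); last by rewrite !inE (negbTE bX).
  rewrite -cardfsU1; congr (#|` _|); apply/fsetP => x; rewrite !inE.
  by case: (eqVneq x b) => [->|] //=; rewrite Db.
rewrite add0n; congr (#|` _|); apply/fsetP => x; rewrite !inE.
by case: (eqVneq x b) => [->|] //=; rewrite (negbTE Db) (negbTE bX).
Qed.

Lemma mono_gD D A : mono (gD D) A = gscale ((-1) ^+ cnt D A) (mon A).
Proof.
elim/fset_min_ind: A => [|b X hX IH].
  rewrite mono0 /cnt (_ : [fset a in fset0 | D a] = fset0) ?cardfs0 ?expr0 ?gscale1 //.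
  by apply/fsetP => x; rewrite !inE.
have bX : b \notin X by apply/negP => /hX; rewrite ltnn.
rewrite mono_cons // IH cnt_cons // exprD gmul_scaler.
rewrite (_ : gD D b = gscale ((-1) ^+ D b) (mon [fset b])); last first.
  by rewrite /gD; case: (D b); rewrite ?expr1 ?expr0 ?gscale1.
rewrite gmul_scalel gscaleA gmul_mon fdisjoint1X bX ginv1_small // expr0 gscale1.
by rewrite mulrC.
Qed.

Lemma hinvE D x : gfin x -> hinv D x = fun C => (-1) ^+ cnt D C * x C.
Proof.
move=> fx; have [S [uS cS]] := gfin_covers fx.
set y := fun C => (-1) ^+ cnt D C * x C.
have cy : covers S y by move=> A AS; rewrite /y cS // mulr0.
rewrite /hinv (sub_lin _ uS cS fx) [RHS](decE uS cy) /lin /dec.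
apply: eq_gsum => A; rewrite mono_gD gscaleA /y mulrC //.
Qed.

Lemma alg_endo_hinv D : alg_endo (hinv D).
Proof. exact: (alg_endo_sub two0 (valid_gD D)). Qed.

Lemma hom_compE D b y :
  hom_comp D b y <-> gfin y /\ hinv D y = (if b then gopp y else y).
Proof.
split.
  case=> fy hy; split => //; rewrite hinvE //; apply: functional_extensionality => C.
  case: (eqVneq (y C) 0) => [yC0|yC]; first by case: (b); rewrite /gopp /gscale yC0 !mulr0.
  have hC := hy C yC; rewrite /cnt -signr_odd hC.
  by case: b {hy hC}; rewrite /gopp /gscale ?expr1 ?expr0 ?mul1r.
case=> fy; rewrite hinvE // => e; split => // A yA.
have := congr1 (fun f => f A) e; rewrite -[X in X * _]signr_odd.
case: b {e}; case: (odd _) => //=; rewrite /gopp /gscale ?expr1 ?expr0 ?mul1r => /eqP.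
  by rewrite eq_sym -subr_eq0 mulN1r -opprD -mulr2n oppr_eq0 -mulr_natr mulf_eq0
    (negbTE yA) (negbTE two0).
by rewrite -subr_eq0 mulN1r -opprD -mulr2n oppr_eq0 -mulr_natr mulf_eq0
    (negbTE yA) (negbTE two0).
Qed.

Lemma endo_agree (f1 f2 : gT -> gT) : alg_endo f1 -> alg_endo f2 ->
  (forall i, f1 (gen F i) = f2 (gen F i)) -> forall x, gfin x -> f1 x = f2 x.
Proof.
move=> e1 e2 h x fx.
by rewrite (endo_unique e1 (fun i => erefl) fx) (endo_unique e2 (fun i => esym (h i)) fx).
Qed.

Lemma z2_of (phi psi : gT -> gT) (D : pred nat) : alg_aut psi ->
  (forall x, gfin x -> gfin (phi x)) ->
  (forall x, gfin x -> psi (phi x) = hinv D (psi x)) -> z2_maps phi psi D.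
Proof.
case=> [[p1 p2 p3 p4 p5] pinj psurj] fphi comm; split.
  move=> b x [fx ex]; apply/hom_compE; split; first exact: p1.
  rewrite -comm // ex; case: (b) => //; exact: p3.
move=> b y /hom_compE [fy ey]; have [x fx exy] := psurj y fy.
exists x => //; split => //; apply: pinj => //; first exact: fphi.
  by case: (b) {ey}; rewrite // /gopp; apply: gfin_scale.
rewrite comm // exy ey; case: (b) => //; rewrite /gopp p3 // exy //.
Qed.

Lemma alg_aut_comp (f h : gT -> gT) : alg_aut f -> alg_aut h -> alg_aut (f \o h).
Proof.
case=> ef fi fs [eh hi hs]; split; first exact: alg_endo_comp.
  move=> x y fx fy /= e; apply: hi => //; apply: fi => //; by case: eh => h1 *; apply: h1.
move=> y fy; have [z fz <-] := fs y fy; have [x fx <-] := hs z fz; by exists x.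
Qed.
End G4.

Section Bij.
Definition cN (R : pred nat) (i : nat) := count R (iota 0 i).

Lemma cN_S (R : pred nat) i : cN R i.+1 = (cN R i + R i)%N.
Proof. by rewrite /cN -addn1 iotaD count_cat /= add0n addn0. Qed.

Lemma cN_mono (R : pred nat) i j : (i <= j)%N -> (cN R i <= cN R j)%N.
Proof.
move/subnKC => <-; rewrite /cN iotaD count_cat; exact: leq_addr.
Qed.

Lemma cN_inj (R : pred nat) i j : R i -> R j -> cN R i = cN R j -> i = j.
Proof.
move=> Ri Rj e; case: (ltngtP i j) => // h.
  by have := cN_mono R h; rewrite cN_S Ri -e addn1 ltnn.
by have := cN_mono R h; rewrite cN_S Rj e addn1 ltnn.
Qed.

Lemma hasnth (R : pred nat) n : (exists i, (n < cN R i)%N) -> exists i, R i /\ cN R i = n.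
Proof.
move=> ex; case: (ex_minnP ex) => m hm hmin.
case: m hm hmin => [|m] hm hmin; first by move: hm; rewrite /cN.
have : ~~ (n < cN R m)%N by apply/negP => /hmin; rewrite ltnn.
rewrite -leqNgt => hle; move: hm; rewrite cN_S.
case: (boolP (R m)) => Rm /= h.
  by exists m; split => //; lia.
by lia.
Qed.

Definition cntrel (P Q : pred nat) (i m : nat) :=
  (Q m == P i) && (cN (fun k => Q k == P i) m == cN (fun k => P k == P i) i).

Lemma cntrel_ex (P Q : pred nat) :
  (forall b n, (exists i, (n < cN (fun k => P k == b) i)%N) ->
               (exists i, (n < cN (fun k => Q k == b) i)%N)) ->
  forall i, exists m, cntrel P Q i m.
Proof.
move=> H i.
have : exists j, (cN (fun k => P k == P i) i < cN (fun k => P k == P i) j)%N.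
  by exists i.+1; rewrite cN_S eqxx addn1.
move/H/hasnth => [m [/eqP e1 e2]]; exists m; by rewrite /cntrel e1 e2 !eqxx.
Qed.

Lemma bij_exists (P Q : pred nat) :
  (forall b n, (exists i, (n < cN (fun k => P k == b) i)%N) <->
               (exists i, (n < cN (fun k => Q k == b) i)%N)) ->
  exists s t : nat -> nat, [/\ cancel s t, cancel t s & forall i, Q (s i) = P i].
Proof.
move=> H.
have exs := cntrel_ex (fun b n => (H b n).1).
have ext := cntrel_ex (fun b n => (H b n).2).
have canc : forall (P Q : pred nat) (s : nat -> nat) (t : nat -> nat),
    (forall i, cntrel P Q i (s i)) -> (forall m, cntrel Q P m (t m)) -> cancel s t.
  move=> P' Q' s t hs ht i; move: (hs i) (ht (s i)).
  rewrite /cntrel => /andP [/eqP e1 /eqP e2] /andP [/eqP e3 /eqP e4].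
  move: e3 e4; rewrite e1 => e3; rewrite e2 => e4.
  apply: (cN_inj (R := fun k => P' k == P' i)) => //=; by rewrite ?e3 eqxx.
exists (fun i => xchoose (exs i)), (fun m => xchoose (ext m)); split.
- by apply: (canc P Q) => i; [exact: (xchooseP (exs i)) | exact: (xchooseP (ext i))].
- by apply: (canc Q P) => i; [exact: (xchooseP (ext i)) | exact: (xchooseP (exs i))].
- by move=> i; have /andP [/eqP -> _] := xchooseP (exs i).
Qed.
Definition unb (R : pred nat) := forall N, exists i, (N <= i)%N /\ R i.
Definition bnd (R : pred nat) N := forall i, (N <= i)%N -> ~~ R i.

Lemma unb_cN (R : pred nat) : unb R -> forall n, exists i, (n < cN R i)%N.
Proof.
move=> u; elim=> [|n [i hi]].
  have [i [_ Ri]] := u 0%N; exists i.+1; rewrite cN_S Ri; lia.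
have [j [ij Rj]] := u i; exists j.+1; rewrite cN_S Rj.
have := cN_mono R ij; lia.
Qed.

Lemma bnd_cN (R : pred nat) N : bnd R N -> forall i, (cN R i <= cN R N)%N.
Proof.
move=> b i; case: (leqP i N) => [|/ltnW]; first exact: cN_mono.
move/subnKC => <-; rewrite /cN iotaD count_cat add0n.
suff -> : count R (iota N (i - N)) = 0%N by rewrite addn0.
rewrite (@eq_in_count _ _ pred0) ?count_pred0 //.
by move=> x; rewrite mem_iota => /andP [h _]; apply/negbTE; apply: b.
Qed.

Lemma char_unb (R : pred nat) n : unb R -> (exists i, (n < cN R i)%N) <-> True.
Proof. by move=> u; split => // _; apply: unb_cN. Qed.

Lemma char_bnd (R : pred nat) N n : bnd R N ->
  (exists i, (n < cN R i)%N) <-> (n < cN R N)%N.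
Proof.
move=> b; split; last by exists N.
by case=> i h; apply: (leq_trans h); apply: bnd_cN.
Qed.

Lemma unb_or_bnd (R : pred nat) : unb R \/ exists N, bnd R N.
Proof.
case: (classic (exists N, bnd R N)) => [h|h]; [by right | left] => N.
case: (classic (exists i, (N <= i)%N /\ R i)) => // h'; case: h; exists N => i Ni.
by apply/negP => Ri; apply: h'; exists i.
Qed.

Lemma cN_all (R : pred nat) K : (forall i, (i < K)%N -> R i) -> cN R K = K.
Proof.
move=> h; rewrite /cN (@eq_in_count _ _ predT) ?count_predT ?size_iota //.
by move=> x; rewrite mem_iota add0n => /andP [_ /h].
Qed.

Lemma classify (P : pred nat) :
  (exists s t, [/\ cancel s t, cancel t s & forall i, (fun i => ~~ odd i) (s i) = P i])
  \/ (exists K s t, [/\ cancel s t, cancel t s & forall i, (fun i => (i < K)%N) (s i) = P i])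
  \/ (exists K s t, [/\ cancel s t, cancel t s & forall i, (fun i => (K <= i)%N) (s i) = P i]).
Proof.
case: (unb_or_bnd (fun k => P k == true)) => [uT|[N bT]].
  case: (unb_or_bnd (fun k => P k == false)) => [uF|[N bF]].
    left; apply: (@bij_exists P (fun i => ~~ odd i)) => b n; case: b.
      rewrite !char_unb //; move=> M; exists (M.*2); split; [lia | by rewrite odd_double].
    rewrite !char_unb //; move=> M; exists (M.*2.+1); split; [lia|by rewrite /= odd_double].
  right; right; set K := cN (fun k => P k == false) N; exists K.
  apply: (@bij_exists P (fun i => (K <= i)%N)) => b n; case: b.
    rewrite !char_unb //; move=> M; exists (M + K)%N.
    split; [lia | apply/eqP; lia].
  rewrite (char_bnd _ bF) (@char_bnd _ K).
    by rewrite [cN _ K]cN_all // => i h; apply/eqP; lia.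
  by move=> i h; apply/negP => /eqP; lia.
have uF : unb (fun k => P k == false).
  move=> M; exists (maxn M N); split; first by rewrite leq_maxl.
  have := bT (maxn M N) (leq_maxr _ _); by case: (P _).
right; left; set K := cN (fun k => P k == true) N; exists K.
apply: (@bij_exists P (fun i => (i < K)%N)) => b n; case: b.
  rewrite (char_bnd _ bT) (@char_bnd _ K).
    by rewrite [cN _ K]cN_all // => i h; apply/eqP; lia.
  by move=> i h; apply/negP => /eqP; lia.
rewrite !char_unb //; move=> M; exists (M + K)%N.
split; [lia | apply/eqP; lia].
Qed.
End Bij.

Section G6.
Variable F : fieldType.
Local Notation gT := (gT F).
Local Notation gmul := (@gmul F).
Local Notation gadd := (@gadd F).
Local Notation gscale := (@gscale F).
Local Notation gzero := (gzero F).
Local Notation mon := (mon F).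
Variable two0 : (2%:R : F) != 0.

Lemma oddel_add x y : oddel x -> oddel y -> oddel (gadd x y).
Proof.
case=> fx ox [fy oy]; split; first exact: gfin_add.
move=> A; rewrite /gadd; case: (eqVneq (x A) 0) => [->|/ox //].
by rewrite add0r => /oy.
Qed.

Lemma mono_eq (g h : nat -> gT) A : (forall a, a \in A -> g a = h a) ->
  mono g A = mono h A.
Proof.
elim/fset_min_ind: A => [|b X hX IH] e; first by rewrite !mono0.
rewrite !mono_cons // e ?fset1U1 // IH // => a aX; apply: e; rewrite !inE aX orbT.
by [].
Qed.

Lemma sub_fix (g : nat -> gT) x : gfin x ->
  (forall A, x A != 0 -> forall a, a \in A -> g a = gen F a) -> sub g x = x.
Proof.
move=> fx h; have [S [uS cS]] := gfin_covers fx.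
rewrite (sub_lin g uS cS fx) [RHS](decE uS cS) /lin /dec; apply: eq_gsum => A.
case: (eqVneq (x A) 0) => [->|xA].
  by apply: functional_extensionality => C; rewrite /gscale !mul0r.
by rewrite (mono_eq (h A xA)) mono_gen.
Qed.

Lemma final (phi : gT -> gT) (D Q : pred nat) (s t : nat -> nat) (psi1 : gT -> gT) :
  alg_aut phi -> alg_aut psi1 ->
  (forall x, gfin x -> psi1 (phi x) = hinv D (psi1 x)) ->
  cancel s t -> cancel t s -> (forall i, Q (s i) = D i) -> z2_iso phi Q.
Proof.
move=> aphi apsi1 comm st ts hQ.
pose gR i := gen F (s i); pose gR' i := gen F (t i).
have vR : valid gR by move=> i; apply: valid_gen.
have vR' : valid gR' by move=> i; apply: valid_gen.
have aR : alg_aut (sub gR).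
  apply: (alg_aut_sub two0 vR vR') => i; rewrite sub_gen /gR /gR' ?ts ?st //.
have comm2 : forall x, gfin x -> sub gR (hinv D x) = hinv Q (sub gR x).
  move=> x fx; apply: (@endo_agree _ (sub gR \o hinv D) (hinv Q \o sub gR) _ _ _ x fx).
  - exact: (alg_endo_comp (alg_endo_sub two0 vR) (alg_endo_hinv two0 D)).
  - exact: (alg_endo_comp (alg_endo_hinv two0 Q) (alg_endo_sub two0 vR)).
  move=> i /=; rewrite /hinv sub_gen [sub gR (gen F i)]sub_gen /gR /= /gD [in RHS]sub_gen /= hQ.
  case: (D i); last by rewrite sub_gen.
  by rewrite /gopp sub_scale ?sub_gen //; apply: gfin_mon.
have apsi : alg_aut (fun x => sub gR (psi1 x)) by exact: (alg_aut_comp aR apsi1).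
rewrite /z2_iso; exists (fun x => sub gR (psi1 x)); split => //.
apply: (z2_of two0) => //.
  by move=> x fx; case: aphi => [[h1 _ _ _ _] _ _]; apply: h1.
move=> x fx /=; rewrite comm // comm2 //.
by case: apsi1 => [[h1 _ _ _ _] _ _]; apply: h1.
Qed.
End G6.

Unset Implicit Arguments.

Theorem mainTheorem6 (F : fieldType) (char0 : [pchar F] =i pred0)
  (Ip Im : pred nat) (d : nat -> gT F) (phi : gT F -> gT F) :
  (* I = Ip u Im, a disjoint union *)
  (forall i, ~~ (Ip i && Im i)) ->
  let I := fun i => Ip i || Im i in
  (* I is infinite *)
  (forall n, exists m, (n <= m)%N /\ I m) ->
  (* I is a proper subset of N *)
  (exists j, ~~ I j) ->
  (* conditions on d_j, j in J = N \ I *)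
  (forall j, ~~ I j ->
     gfin (d j) /\
     forall A, d j A != 0 ->
       [/\ odd #|` A|, (forall a, a \in A -> I a)
         & ~~ odd #|` [fset a in A | Im a]|]) ->
  (* phi is an involutive automorphism of E with the given values *)
  alg_aut phi ->
  (forall x, gfin x -> phi (phi x) = x) ->
  (forall i, Ip i -> phi (gen F i) = gen F i) ->
  (forall i, Im i -> phi (gen F i) = gopp (gen F i)) ->
  (forall j, ~~ I j ->
     phi (gen F j) = gadd (gopp (gen F j)) (gscale 2 (d j))) ->
  z2_iso phi deg_Einf \/ (exists k, z2_iso phi (deg_Ekstar k))
    \/ (exists k, z2_iso phi (deg_Ek k)).
Proof.
move=> disj I Iinf Iprop hd aphi invol hIp hIm hJ.
have two0 : (2%:R : F) != 0 by rewrite (proj1 (pcharf0P F) char0).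
have gfin_gen : forall i, gfin (gen F i) by move=> i; exact: (gfin_mon F [fset i]).
pose D := fun i => Im i || ~~ I i.
pose gS i := if I i then gen F i else gadd (gen F i) (d i).
pose gS' i := if I i then gen F i else gadd (gen F i) (gopp (d i)).
have od : forall j, ~~ I j -> oddel (d j).
  move=> j hj; split; first exact: (hd j hj).1.
  by move=> A hA; have [h _ _] := (hd j hj).2 A hA.
have vS : valid gS.
  move=> i; rewrite /gS /=; case: ifP => Ii; first exact: valid_gen.
  by apply: oddel_add; [exact: valid_gen | apply: od; rewrite Ii].
have vS' : valid gS'.
  move=> i; rewrite /gS' /=; case: ifP => Ii; first exact: valid_gen.
  by apply: oddel_add; [exact: valid_gen | apply: oddel_scale; apply: od; rewrite Ii].
have fixd : forall (g : nat -> gT F), (forall a, I a -> g a = gen F a) ->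
    forall j, ~~ I j -> sub g (d j) = d j.
  move=> g hg j hj; apply: sub_fix; first exact: (hd j hj).1.
  move=> A hA a aA; apply: hg; have [_ h _] := (hd j hj).2 A hA; exact: h.
have hS : forall a, I a -> gS a = gen F a by move=> a Ia; rewrite /gS Ia.
have hS' : forall a, I a -> gS' a = gen F a by move=> a Ia; rewrite /gS' Ia.
have fdj : forall j, ~~ I j -> gfin (d j) by move=> j hj; exact: (hd j hj).1.
have aS : alg_aut (sub gS).
  apply: (alg_aut_sub two0 vS vS') => i.
    rewrite /gS' /=; case: ifP => Ii; first by rewrite sub_gen /gS /= Ii.
    have fdi : gfin (d i) by apply: fdj; rewrite Ii.
    rewrite sub_add; [|exact: gfin_gen|exact: gfin_scale].
    rewrite /gopp sub_scale // sub_gen fixd; [|by []|by rewrite Ii].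
    rewrite /gS /= Ii.
    by apply: functional_extensionality => C; rewrite /gadd /gscale; ring.
  rewrite /gS /=; case: ifP => Ii; first by rewrite sub_gen /gS' /= Ii.
  have fdi : gfin (d i) by apply: fdj; rewrite Ii.
  rewrite sub_add; [|exact: gfin_gen|exact: fdi].
  rewrite sub_gen fixd; [|by []|by rewrite Ii].
  rewrite /gS' /= Ii.
  by apply: functional_extensionality => C; rewrite /gadd /gopp /gscale; ring.
have endo_phi : alg_endo phi by case: aphi.
have comm1 : forall x, gfin x -> sub gS (phi x) = hinv D (sub gS x).
  move=> x fx.
  apply: (@endo_agree _ (fun x => sub gS (phi x)) (fun x => hinv D (sub gS x)) _ _ _ x fx).
  - exact: (alg_endo_comp (alg_endo_sub two0 vS) endo_phi).
  - exact: (alg_endo_comp (alg_endo_hinv two0 D) (alg_endo_sub two0 vS)).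
  move=> i /=; rewrite [sub gS (gen F i)]sub_gen.
  case: (boolP (Ip i)) => Ipi.
    have Ii : I i by rewrite /I Ipi.
    have Imi : Im i = false by apply/negbTE; move: (disj i); rewrite Ipi.
    rewrite hIp // sub_gen hS // /hinv sub_gen /gD /D Imi Ii.
    by [].
  case: (boolP (Im i)) => Imi.
    have Ii : I i by rewrite /I Imi orbT.
    rewrite hIm // /gopp sub_scale ?gfin_gen // sub_gen hS // /hinv sub_gen /gD /D Imi.
    by [].
  have Ji : ~~ I i by rewrite /I negb_or Ipi Imi.
  rewrite hJ // sub_add; first last.
  - by apply: gfin_scale; apply: fdj.
  - by apply: gfin_scale.
  have fdi := fdj i Ji.
  rewrite /gopp !sub_scale; try exact: fdi; try exact: (gfin_gen i).
  rewrite sub_gen fixd //.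
  rewrite /gS /= (negbTE Ji) /hinv sub_add; try exact: fdi; try exact: (gfin_gen i).
  rewrite sub_gen /gD /D /= Ji orbT.
  have -> : sub (gD F D) (d i) = d i.
    change (hinv D (d i) = d i); rewrite (hinvE D fdi); apply: functional_extensionality => C.
    case: (eqVneq (d i C) 0) => [->|dC]; first by rewrite mulr0.
    have [_ hI hIm'] := (hd i Ji).2 C dC.
    rewrite /cnt (_ : [fset a in C | D a] = [fset a in C | Im a]).
      by rewrite -signr_odd (negbTE hIm') expr0 mul1r.
    apply/fsetP => a; rewrite !inE /D; case: (boolP (a \in C)) => //= aC.
    by rewrite (hI a aC) orbF.
  by apply: functional_extensionality => C; rewrite /gadd /gopp /gscale; ring.
have [[s [t [st ts hQ]]]|[[K [s [t [st ts hQ]]]]|[K [s [t [st ts hQ]]]]]] := classify D.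
- by left; apply: (@final F two0 phi D deg_Einf s t (sub gS)).
- by right; left; exists K; apply: (@final F two0 phi D (deg_Ekstar K) s t (sub gS)).
- by right; right; exists K; apply: (@final F two0 phi D (deg_Ek K) s t (sub gS)).
Qed.
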